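(* Let $A,B,D>0$ be constants and let $f:(0,\infty)\to\mathbb{R}$ be defined by $$f(X)=A(2DX)^{-1/2}-B(2DX)^{-3/2}.$$ Set $\tilde{A}=A/(2D)^{1/2}$ and $\tilde{B}=B/(2D)^{3/2}$. Let $\beta>0$ and $\alpha>1$, and let $g:(0,\infty)\to(-\infty,0]$ be given by $g(X)=-\beta X^{\alpha}$. If $$\dot{g}\!\left(\frac{5\tilde{B}}{\tilde{A}}\right)>\dot{f}\!\left(\frac{5\tilde{B}}{\tilde{A}}\right),$$ where the dot denotes the derivative with respect to $X$, then the function $f-g$ (the M-Köhler curve) has at least one local maximum and at least one local minimum on $(0,\infty)$.
   Context: The function $f$ is the Köhler curve written in the variable $X=r^2/(2D)$ (scaled squared droplet radius), and $g$ is a sink term; the condensational growth model is $\dot X=\lambda-(f(X)-g(X))$, and $f-g$ is called the M-Köhler curve. *)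

(* Defs.v *)
From Stdlib Require Import Reals.
From Coquelicot Require Import Coquelicot.
Open Scope R_scope.

(* Köhler curve in the variable X = r^2/(2D):  f(X) = A (2DX)^{-1/2} - B (2DX)^{-3/2}
   (meaningful for X > 0). *)
Definition kohler (A B D : R) (X : R) : R :=
  A * Rpower (2 * D * X) (-(1/2)) - B * Rpower (2 * D * X) (-(3/2)).

Definition sink (beta alpha : R) (X : R) : R := - (beta * Rpower X alpha).

Definition is_local_max_pos (h : R -> R) (x : R) : Prop :=
  0 < x /\ exists delta, 0 < delta /\
    forall y, 0 < y -> Rabs (y - x) < delta -> h y <= h x.

Definition is_local_min_pos (h : R -> R) (x : R) : Prop :=
  0 < x /\ exists delta, 0 < delta /\
    forall y, 0 < y -> Rabs (y - x) < delta -> h x <= h y.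

(* Main.v *)
Require Import Defs.
From Stdlib Require Import Reals Lra Psatz.
From Coquelicot Require Import Coquelicot.
Open Scope R_scope.

Lemma exd_k A B D x : 0 < D -> 0 < x -> ex_derive (kohler A B D) x.
Proof. intros. unfold kohler, Rpower. auto_derive. nra. Qed.
Lemma exd_s b a x : 0 < x -> ex_derive (sink b a) x.
Proof. intros. unfold sink, Rpower. auto_derive. lra. Qed.
Lemma exp_le' x y : x <= y -> exp x <= exp y.
Proof. intros [H|H]. left; now apply exp_increasing. subst; lra. Qed.
Lemma abs_bd y M d : Rabs (y - M) < d -> M - d < y < M + d.
Proof. unfold Rabs; destruct Rcase_abs; lra. Qed.

Lemma int_max (h:R->R) a p b: 0<a -> a<p<b -> (forall c, a<=c<=b -> continuity_pt h c) ->
  h a < h p -> h b < h p -> exists x, is_local_max_pos h x.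
Proof.
  intros Ha Hp Hc H1 H2.
  destruct (continuity_ab_maj h a b) as [M [HM HMr]]; [lra|exact Hc|].
  assert (h p <= h M) by (apply HM; lra).
  assert (M <> a) by (intro; subst; lra).
  assert (M <> b) by (intro; subst; lra).
  exists M; split; [lra|]. exists (Rmin (M-a) (b-M)); split.
  apply Rmin_glb_lt; lra.
  intros y _ Hy. apply abs_bd in Hy. apply HM.
  pose proof (Rmin_l (M-a) (b-M)); pose proof (Rmin_r (M-a) (b-M)); lra.
Qed.

Lemma int_min (h:R->R) a p b: 0<a -> a<p<b -> (forall c, a<=c<=b -> continuity_pt h c) ->
  h p < h a -> h p < h b -> exists x, is_local_min_pos h x.
Proof.
  intros Ha Hp Hc H1 H2.
  destruct (continuity_ab_min h a b) as [M [HM HMr]]; [lra|exact Hc|].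
  assert (h M <= h p) by (apply HM; lra).
  assert (M <> a) by (intro; subst; lra).
  assert (M <> b) by (intro; subst; lra).
  exists M; split; [lra|]. exists (Rmin (M-a) (b-M)); split.
  apply Rmin_glb_lt; lra.
  intros y _ Hy. apply abs_bd in Hy. apply HM.
  pose proof (Rmin_l (M-a) (b-M)); pose proof (Rmin_r (M-a) (b-M)); lra.
Qed.

Lemma cont_h A B D b a c : 0 < D -> 0 < c ->
  continuity_pt (fun X => kohler A B D X - sink b a X) c.
Proof.
  intros. apply continuity_pt_filterlim.
  assert (E : ex_derive (fun X => kohler A B D X - sink b a X) c).
  { unfold kohler, sink, Rpower. auto_derive. nra. }
  exact (ex_derive_continuous _ _ E).
Qed.

Lemma Rp_half u : 0 < u -> Rpower (/(u*u)) (-(1/2)) = u.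
Proof. intros. unfold Rpower. rewrite ln_Rinv by nra. rewrite ln_mult by lra.
  replace (-(1/2) * -(ln u + ln u)) with (ln u) by field. apply exp_ln; lra. Qed.
Lemma Rp_32 u : 0 < u -> Rpower (/(u*u)) (-(3/2)) = u*u*u.
Proof. intros. unfold Rpower. rewrite ln_Rinv by nra. rewrite ln_mult by lra.
  replace (-(3/2) * -(ln u + ln u)) with (ln u + ln u + ln u) by field.
  rewrite !exp_plus, exp_ln; lra. Qed.

Lemma Rp_le1 x a : 0 < x <= 1 -> 0 <= a -> Rpower x a <= 1.
Proof. intros. unfold Rpower. rewrite <- exp_0. apply exp_le'.
  assert (ln x <= 0) by (rewrite <- ln_1; apply ln_le; lra). nra. Qed.
Lemma Rp_le1' x a : 1 <= x -> a <= 0 -> Rpower x a <= 1.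
Proof. intros. unfold Rpower. rewrite <- exp_0. apply exp_le'.
  assert (0 <= ln x) by (rewrite <- ln_1; apply ln_le; lra). nra. Qed.
Lemma Rp_ge x a : 1 <= x -> 1 <= a -> x <= Rpower x a.
Proof. intros. unfold Rpower. rewrite <- (exp_ln x) at 1 by lra. apply exp_le'.
  assert (0 <= ln x) by (rewrite <- ln_1; apply ln_le; lra). nra. Qed.

Theorem proposition1 (A B D beta alpha : R) :
  0 < A -> 0 < B -> 0 < D -> 0 < beta -> 1 < alpha ->
  let At := A / Rpower (2 * D) (1/2) in
  let Bt := B / Rpower (2 * D) (3/2) in
  let f := kohler A B D in
  let g := sink beta alpha in
  Derive g (5 * Bt / At) > Derive f (5 * Bt / At) ->
  (exists x, is_local_max_pos (fun X => f X - g X) x) /\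
  (exists x, is_local_min_pos (fun X => f X - g X) x).
Proof.
  intros HA HB HD Hb Ha At Bt f g Hder.
  assert (HAt : 0 < At) by (unfold At, Rpower; apply Rdiv_lt_0_compat; [lra|apply exp_pos]).
  assert (HBt : 0 < Bt) by (unfold Bt, Rpower; apply Rdiv_lt_0_compat; [lra|apply exp_pos]).
  set (x0 := 5 * Bt / At) in *.
  assert (Hx0 : 0 < x0) by (unfold x0; apply Rdiv_lt_0_compat; lra).
  subst f g. clearbody x0. clear At Bt HAt HBt.
  set (h := fun X => kohler A B D X - sink beta alpha X).
  assert (Hl : Derive h x0 = Derive (kohler A B D) x0 - Derive (sink beta alpha) x0).
  { unfold h; apply Derive_minus; [apply exd_k|apply exd_s]; lra. }
  set (l := Derive h x0) in *.
  assert (Hneg : l < 0) by lra.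
  assert (Hd : derivable_pt_lim h x0 l).
  { apply is_derive_Reals. unfold l. apply Derive_correct.
    unfold h, kohler, sink, Rpower. auto_derive. nra. }
  destruct (Hd (-l/2)) as [delta Hdel]; [lra|].
  pose proof (cond_pos delta) as Hdp.
  set (d := Rmin (delta/2) (Rmin (x0/2) 1)).
  assert (Hd1 : d <= delta/2) by apply Rmin_l.
  assert (Hd2 : d <= x0/2) by (eapply Rle_trans; [apply Rmin_r|apply Rmin_l]).
  assert (Hd3 : d <= 1) by (eapply Rle_trans; [apply Rmin_r|apply Rmin_r]).
  assert (Hd0 : 0 < d) by (unfold d; repeat apply Rmin_glb_lt; lra).
  assert (Hy : h x0 < h (x0 - d)).
  { specialize (Hdel (-d)). 
    assert (Hq : Rabs ((h (x0 + - d) - h x0) / - d - l) < - l / 2).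
    { apply Hdel; [lra|]. rewrite Rabs_Ropp, Rabs_pos_eq; lra. }
    apply abs_bd in Hq.
    set (q := (h (x0 + - d) - h x0) / - d) in *.
    assert (E : h (x0 + - d) - h x0 = q * - d) by (unfold q; field; lra).
    replace (x0 - d) with (x0 + - d) by ring. nra. }
  assert (Hz : h (x0 + d) < h x0).
  { specialize (Hdel d). 
    assert (Hq : Rabs ((h (x0 + d) - h x0) / d - l) < - l / 2).
    { apply Hdel; [lra|]. rewrite Rabs_pos_eq; lra. }
    apply abs_bd in Hq.
    set (q := (h (x0 + d) - h x0) / d) in *.
    assert (E : h (x0 + d) - h x0 = q * d) by (unfold q; field; lra).
    nra. }
  set (K := h x0) in *.
  assert (Hcont : forall c, 0 < c -> continuity_pt h c) by (intros; apply cont_h; lra).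
  split.
  -
    set (y := x0 - d) in *.
    assert (Hy0 : 0 < y) by (unfold y; lra).
    assert (Hyx : y < x0) by (unfold y; lra).
    set (c := (A + Rabs K + beta + 1) / B).
    assert (Hc : B * c = A + Rabs K + beta + 1) by (unfold c; field; lra).
    assert (Hc0 : 0 < c) by (unfold c; pose proof (Rabs_pos K); apply Rdiv_lt_0_compat; lra).
    set (a1 := / (2 * D * y)).
    assert (Ha1 : 2 * D * y * a1 = 1) by (unfold a1; field; lra).
    assert (Ha10 : 0 < a1) by (unfold a1; apply Rinv_0_lt_compat; nra).
    set (a2 := / (2 * D)).
    assert (Ha2 : 2 * D * a2 = 1) by (unfold a2; field; lra).
    assert (Ha20 : 0 < a2) by (unfold a2; apply Rinv_0_lt_compat; nra).
    set (u0 := 1 + c + a1 + a2).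
    assert (Hu0 : 1 < u0) by (unfold u0; lra).
    assert (Hu0c : u0 >= 1 + c) by (unfold u0; lra).
    set (e := / (2 * D * (u0 * u0))).
    assert (He : e * (2 * D * (u0 * u0)) = 1) by (unfold e; field; nra).
    assert (He0 : 0 < e) by (unfold e; apply Rinv_0_lt_compat; nra).
    assert (Hu1 : 2 * D * u0 * y > 1).
    { assert (u0 > a1) by (unfold u0; lra). nra. }
    assert (Hu2 : 2 * D * u0 > 1).
    { assert (u0 > a2) by (unfold u0; lra). nra. }
    assert (Hey : e < y).
    { assert (2 * D * (u0 * u0) * y > 1) by nra. nra. }
    assert (He1 : e < 1).
    { assert (2 * D * (u0 * u0) > 1) by nra. nra. }
    assert (E2 : 2 * D * e = / (u0 * u0)) by (unfold e; field; nra).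
    clearbody e u0 a1 a2 c y.
    assert (Hhe : h e < K).
    { unfold h, kohler, sink.
      rewrite E2.
      rewrite Rp_half, Rp_32 by lra.
      pose proof (Rp_le1 e alpha (conj He0 (Rlt_le _ _ He1)) ltac:(lra)).
      assert (H0 : - Rabs K <= K) by (unfold Rabs; destruct Rcase_abs; lra).
      assert (P1 : 0 <= B * (u0 * u0) * (u0 - c)) by (apply Rmult_le_pos; [apply Rmult_le_pos; nra|lra]).
      assert (P2 : 0 <= (Rabs K + beta + 1) * (u0 * (u0 - 1))) by (apply Rmult_le_pos; [pose proof (Rabs_pos K); lra|apply Rmult_le_pos; lra]).
      assert (P3 : 0 <= beta * (1 - Rpower e alpha)) by (apply Rmult_le_pos; lra).
      assert (P4 : 0 <= A * (u0 * (u0 - 1))) by (apply Rmult_le_pos; [lra|apply Rmult_le_pos; lra]).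
      assert (B * (u0 * u0 * u0) = B * (u0 * u0) * (u0 - c) + (B * c) * (u0 * u0)) by ring.
      rewrite Hc in H1.
      assert (u0 * u0 = u0 * (u0 - 1) + u0) by ring.
      assert (P5 : 0 <= (Rabs K + beta + 1) * (u0 - 1)) by (apply Rmult_le_pos; [pose proof (Rabs_pos K); lra|lra]).
      clear -H H0 P1 P2 P3 P4 P5 H1 H2 Hu0 Hc0. lra. }
    apply (int_max h e y x0).
    + lra.
    + split; lra.
    + intros; apply Hcont; lra.
    + lra.
    + exact Hy.
  -
    set (z := x0 + d) in *.
    set (a2 := / (2 * D)).
    assert (Ha2 : 2 * D * a2 = 1) by (unfold a2; field; lra).
    assert (Ha20 : 0 < a2) by (unfold a2; apply Rinv_0_lt_compat; nra).
    set (c := (Rabs K + B + 1) / beta).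
    assert (Hc : beta * c = Rabs K + B + 1) by (unfold c; field; lra).
    assert (Hc0 : 0 < c) by (unfold c; pose proof (Rabs_pos K); apply Rdiv_lt_0_compat; lra).
    set (M := x0 + 2 + a2 + c).
    assert (HM1 : 1 <= M) by (unfold M; lra).
    assert (HM2 : 1 <= 2 * D * M) by (unfold M; nra).
    assert (HhM : K < h M).
    { unfold h, kohler, sink.
      assert (0 < Rpower (2 * D * M) (- (1 / 2))) by (unfold Rpower; apply exp_pos).
      pose proof (Rp_le1' (2 * D * M) (- (3/2)) HM2 ltac:(lra)).
      pose proof (Rp_ge M alpha HM1 ltac:(lra)).
      pose proof (Rle_abs K).
      assert (beta * M >= beta * c) by (unfold M; nra).
      nra. }
    apply (int_min h x0 z M).
    + lra.
    + unfold z, M; split; lra.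
    + intros; apply Hcont; lra.
    + exact Hz.
    + lra.
Qed.
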